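(* Let $(\Omega,\mathcal F,P)$ be a probability space and $T:\Omega\to\Omega$ a measurable transformation preserving $P$ such that $(\Omega,\mathcal F,P,T)$ is ergodic. Let $b:\Omega\to\mathbb R$ and $r:\Omega\to(0,\infty)$ be random variables, and for $\omega\in\Omega$ let $\varphi_\omega(y)=b(\omega)+r(\omega)y$, $y\in\mathbb R$. Assume that the set $S=\{\varphi_\omega:\omega\in\Omega\}$ of affine maps is countable, with $P(\varphi_\omega=\varphi)>0$ for every $\varphi\in S$, that $b\in L^1(P)$, $\log r\in L^1(P)$ and $\int_\Omega\log r\,dP<0$. Set $r_0(\omega)=1$, $r_n(\omega)=r(\omega)r(T\omega)\cdots r(T^{n-1}\omega)$ for $n\ge1$, and define the (almost everywhere defined) random variable $$X(\omega)=\sum_{n\ge0}r_n(\omega)\,b(T^n\omega).$$ Let $P_X$ be the law of $X$ on $(\mathbb R,\mathcal B(\mathbb R))$, i.e. $P_X(A)=P(X^{-1}(A))$. Then $P_X$ is of pure type: it is either purely atomic, or absolutely continuous with respect to Lebesgue measure, or continuous and singular with respect to Lebesgue measure.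
   Context: Lebesgue measure on $\mathbb R$ is denoted $Leb$. *)

(* Defs.v *)
From HB Require Import structures.
From mathcomp Require Import all_boot all_order all_algebra.
From mathcomp Require Import all_classical all_reals all_analysis.
Set Implicit Arguments. Unset Strict Implicit. Unset Printing Implicit Defensive.
Import Order.TTheory GRing.Theory Num.Theory.
Import numFieldNormedType.Exports.
Local Open Scope classical_set_scope.
Local Open Scope ring_scope.

Definition measure_preserving d (Om : measurableType d) (R : realType)
  (P : probability Om R) (T : Om -> Om) : Prop :=
  measurable_fun setT T /\
  forall A : set Om, measurable A -> P (T @^-1` A) = P A.

Definition ergodic d (Om : measurableType d) (R : realType)
  (P : probability Om R) (T : Om -> Om) : Prop :=
  forall A : set Om, measurable A -> T @^-1` A = A ->
    P A = 0%E \/ P A = 1%E.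

Definition rprod (Om : Type) (R : realType) (T : Om -> Om) (r : Om -> R)
  (n : nat) (w : Om) : R :=
  \prod_(i < n) r (iter i T w).

(* X(w) = sum_{n>=0} r_n(w) b(T^n w), as the limit of partial sums
   (the library's default value where the series diverges) *)
Definition Xseries (Om : Type) (R : realType) (T : Om -> Om) (b r : Om -> R)
  (w : Om) : R :=
  limn (fun N => \sum_(0 <= n < N) rprod T r n w * b (iter n T w)).

Definition law d (Om : measurableType d) (R : realType)
  (P : probability Om R) (X : Om -> R) : set R -> \bar R :=
  fun A => P (X @^-1` A).

Definition purely_atomic (R : realType) (mu : set R -> \bar R) : Prop :=
  exists C : set R, countable C /\ mu (~` C) = 0%E.

Definition abs_continuous_Leb (R : realType) (mu : set R -> \bar R) : Prop :=
  forall A : set R, measurable A -> (@lebesgue_measure R) A = 0%E -> mu A = 0%E.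

Definition continuous_singular (R : realType) (mu : set R -> \bar R) : Prop :=
  (forall x : R, mu [set x] = 0%E) /\
  exists A : set R, measurable A /\ (@lebesgue_measure R) A = 0%E /\ mu (~` A) = 0%E.

(* Main.v *)
Require Import Defs.
From HB Require Import structures.
From mathcomp Require Import all_boot all_order all_algebra.
From mathcomp Require Import all_classical all_reals all_analysis.
From mathcomp Require Import measurable_realfun.
From mathcomp Require Import ring.
Import Order.TTheory GRing.Theory Num.Theory.
Import numFieldNormedType.Exports.
Local Open Scope classical_set_scope.
Local Open Scope ring_scope.
Set Implicit Arguments. Unset Strict Implicit. Unset Printing Implicit Defensive.


Definition Ssum (Om : Type) (R : realType) (T : Om -> Om) (b r : Om -> R)
  (N : nat) (w : Om) : R :=
  \sum_(0 <= n < N) rprod T r n w * b (iter n T w).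

Lemma Ssum_S (Om : Type) (R : realType) (T : Om -> Om) (b r : Om -> R) N w :
  Ssum T b r N.+1 w = b w + r w * Ssum T b r N (T w).
Proof.
rewrite /Ssum big_nat_recl // /rprod big_ord0 mul1r /=; congr (_ + _).
rewrite mulr_sumr; apply: eq_bigr => n _.
rewrite big_ord_recl /= mulrA; congr (_ * _ * _).
  by apply: eq_bigr => i _; rewrite add0n -iterS iterSr.
by rewrite -iterS iterSr.
Qed.

Lemma Ssum_cvgT (Om : Type) (R : realType) (T : Om -> Om) (b r : Om -> R) w :
  cvgn (fun N => Ssum T b r N (T w)) ->
  (fun N => Ssum T b r N w) @ \oo --> b w + r w * limn (fun N => Ssum T b r N (T w)).
Proof.
move=> cv; rewrite -cvg_shiftS /=.
under eq_fun do rewrite Ssum_S.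
apply: cvgD; first exact: cvg_cst.
by apply: cvgM; [exact: cvg_cst|].
Qed.

Lemma Ssum_cvg_T (Om : Type) (R : realType) (T : Om -> Om) (b r : Om -> R) w :
  0 < r w ->
  cvgn (fun N => Ssum T b r N w) -> cvgn (fun N => Ssum T b r N (T w)).
Proof.
move=> r0 cv.
have E : (fun N => Ssum T b r N (T w)) = (fun N => (Ssum T b r N.+1 w - b w) / r w).
  apply/funext => N; rewrite Ssum_S addrC addKr mulrC mulKf //.
  by rewrite gt_eqF.
rewrite E; apply/cvg_ex; exists ((limn (fun N => Ssum T b r N w) - b w) / r w).
apply: cvgM; last exact: cvg_cst.
apply: cvgB; last exact: cvg_cst.
by rewrite (cvg_shiftS (fun N => Ssum T b r N w)).
Qed.

Lemma XE (Om : Type) (R : realType) (T : Om -> Om) (b r : Om -> R) w :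
  Xseries T b r w = limn (fun N => Ssum T b r N w).
Proof. by []. Qed.

Lemma X_cvg (Om : Type) (R : realType) (T : Om -> Om) (b r : Om -> R) w :
  0 < r w -> cvgn (fun N => Ssum T b r N w) ->
  Xseries T b r w = b w + r w * Xseries T b r (T w).
Proof.
move=> r0 cv; rewrite !XE; apply: cvg_lim => //.
by apply: Ssum_cvgT; apply: Ssum_cvg_T.
Qed.

Lemma X_div (Om : Type) (R : realType) (T : Om -> Om) (b r : Om -> R) w :
  ~ cvgn (fun N => Ssum T b r N w) ->
  Xseries T b r w = get (fun _ : R => False).
Proof.
move=> ncv; rewrite XE /lim /lim_in; congr (get _).
apply/funext => l; apply/propext; split => // H; apply: ncv.
by apply/cvg_ex; exists l.
Qed.

Lemma X_back (Om : Type) (R : realType) (T : Om -> Om) (b r : Om -> R)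
   (E : set R) :
  (forall w, 0 < r w) ->
  (forall w z, E (b w + r w * z) -> E z) ->
  forall w, E (Xseries T b r w) -> E (Xseries T b r (T w)).
Proof.
move=> r0 HE w.
have [cv|ncv] := pselect (cvgn (fun N => Ssum T b r N w)).
  by rewrite X_cvg //; apply: HE.
rewrite (X_div ncv) X_div //.
by move=> cv; apply: ncv; apply/cvg_ex; eexists; apply: Ssum_cvgT cv.
Qed.


Lemma iter_meas d (Om : measurableType d) (T : Om -> Om) n :
  measurable_fun setT T -> measurable_fun setT (iter n T).
Proof.
move=> mT; elim: n => [|n IH] /=; first exact: measurable_id.
exact: (measurableT_comp (f:=T) (g:=iter n T)).
Qed.

Lemma Ssum_meas d (Om : measurableType d) (R : realType) (T : Om -> Om) (b r : Om -> R) N :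
  measurable_fun setT T -> measurable_fun setT b -> measurable_fun setT r ->
  measurable_fun setT (Ssum T b r N).
Proof.
move=> mT mb mr.
have mrp n : measurable_fun setT (rprod T r n).
  elim: n => [|n IH].
    by rewrite /rprod; under eq_fun do rewrite big_ord0; exact: measurable_cst.
  rewrite /rprod; under eq_fun do rewrite big_ord_recr /=.
  apply: measurable_realfun.measurable_funM => //.
  exact: measurableT_comp mr (iter_meas _ mT).
elim: N => [|N IH].
  by rewrite /Ssum; under eq_fun do rewrite big_geq //; exact: measurable_cst.
rewrite /Ssum; under eq_fun do rewrite big_nat_recr //=.
apply: measurable_realfun.measurable_funD => //.
apply: measurable_realfun.measurable_funM => //.
exact: measurableT_comp mb (iter_meas _ mT).
Qed.

Lemma cvg_esup_einf (R : realType) (u : nat -> R) :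
  cvgn u <-> (limn_esup (EFin \o u) = limn_einf (EFin \o u) /\
              (-oo < limn_esup (EFin \o u) < +oo)%E).
Proof.
split.
  move=> cv.
  have ue : (EFin \o u) @ \oo --> (limn u)%:E.
    by apply: cvg_EFin; [exact: nearW | exact: cv].
  have [-> ->] := cvg_limn_einf_sup ue; split => //.
  by rewrite ltNyr ltry.
move=> [ei /fin_numPlt].
case Hl : (limn_esup (EFin \o u)) => [l| |] // _.
have ul : (EFin \o u) @ \oo --> l%:E.
  apply: (@squeeze_cvge _ _ _ _ (einfs (EFin \o u)) _ (esups (EFin \o u))).
  - apply: nearW => n; apply/andP; split.
      by apply: ereal_inf_lbound; exists n => /=.
    by apply: ereal_sup_ubound; exists n => /=.
  - have := @is_cvg_einfs _ (EFin \o u).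
    by rewrite -limn_einf_lim -ei Hl.
  - have := @is_cvg_esups _ (EFin \o u).
    by rewrite -limn_esup_lim Hl.
move/fine_cvgP : ul => [_ ul].
by apply/cvg_ex; exists l.
Qed.

Lemma X_meas d (Om : measurableType d) (R : realType) (T : Om -> Om) (b r : Om -> R) :
  measurable_fun setT T -> measurable_fun setT b -> measurable_fun setT r ->
  measurable_fun setT (Xseries T b r).
Proof.
move=> mT mb mr.
pose Xe : Om -> \bar R := fun w => limn_esup (EFin \o (fun N => Ssum T b r N w)).
pose Xi : Om -> \bar R := fun w => limn_einf (EFin \o (fun N => Ssum T b r N w)).
have mXe : measurable_fun setT Xe.
  apply: (@measurable_realfun.measurable_fun_limn_esup _ _ _ _ (fun N w => (Ssum T b r N w)%:E)).
  by move=> n; apply/measurable_realfun.measurable_EFinP; exact: Ssum_meas.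
have mXi : measurable_fun setT Xi.
  have -> : Xi = -%E \o (fun w => limn_esup (fun N => - (Ssum T b r N w)%:E)%E) by [].
  apply: measurableT_comp; first exact: measurable_realfun.oppe_measurable.
  apply: (@measurable_realfun.measurable_fun_limn_esup _ _ _ _ (fun N w => - (Ssum T b r N w)%:E)%E).
  move=> n; apply: measurableT_comp; first exact: measurable_realfun.oppe_measurable.
  by apply/measurable_realfun.measurable_EFinP; exact: Ssum_meas.
pose D := [set w | cvgn (fun N => Ssum T b r N w)].
have DE : D = (setT `&` [set w | Xe w = Xi w]) `&`
              ((setT `&` [set w | (cst -oo w < Xe w)%E]) `&` (setT `&` [set w | (Xe w < cst +oo w)%E])).
  apply/seteqP; split => w /=.
    by move/cvg_esup_einf => [H1 /andP[H2 H3]]; repeat split.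
  by move=> [[_ H1] [[_ H2] [_ H3]]]; apply/cvg_esup_einf; split => //; apply/andP; split; [exact: H2|exact: H3].
have mD : measurable D.
  rewrite DE; apply: measurableI; first exact: measurable_eqe.
  apply: measurableI; apply: measurable_lte => //; exact: measurable_cst.
rewrite -(setUv D); apply/measurable_funU => //; first exact: measurableC.
split.
  apply: (eq_measurable_fun (fine \o Xe)).
    move=> w; rewrite inE => Dw /=; rewrite /Xe XE.
    have ue : (EFin \o (fun N => Ssum T b r N w)) @ \oo --> (limn (fun N => Ssum T b r N w))%:E.
      by apply: cvg_EFin; [exact: nearW | exact: Dw].
    by have [_ ->] := cvg_limn_einf_sup ue.
  apply: measurableT_comp; first exact: measurable_realfun.fine_measurable.
  exact: measurable_funS mXe.
apply: (eq_measurable_fun (cst (get (fun _ : R => False)))); last exact: measurable_cst.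
by move=> w; rewrite inE => Dw; rewrite X_div.
Qed.


Lemma core_inv d (Om : measurableType d) (R : realType) (P : probability Om R)
  (T : Om -> Om) (B : set Om) :
  measure_preserving P T -> ergodic P T -> measurable B ->
  B `<=` T @^-1` B -> P B = 0%E \/ P B = 1%E.
Proof.
move=> [mT PT] erg mB BT.
pose F n := iter n T @^-1` B.
have mF n : measurable (F n).
  by rewrite /F -(setTI (_ @^-1` _)); apply: (iter_meas n mT) => //.
have FS n : F n.+1 = T @^-1` F n.
  by apply/seteqP; split => w; rewrite /F /= -iterS iterSr.
have PF n : P (F n) = P B.
  elim: n => [|n IH]; first by [].
  by rewrite FS PT.
have Finc n : F n `<=` F n.+1.
  by move=> w; rewrite /F /= => /BT.
have Fmono : {homo F : n m / (n <= m)%N >-> (n <= m)%O}.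
  move=> n m nm; rewrite -(subnKC nm).
  elim: (m - n)%N => [|k IH]; first by rewrite addn0.
  rewrite addnS; apply: le_trans IH _; apply/asboolP; exact: Finc.
pose U := \bigcup_n F n.
have mU : measurable U by exact: bigcup_measurable.
have TU : T @^-1` U = U.
  apply/seteqP; split => w /=.
    by move=> [n _ Fn]; exists n.+1 => //; rewrite FS.
  move=> [n _ Fn]; exists n => //; change ((T @^-1` F n) w); rewrite -FS; exact: Finc.
have PU : P U = P B.
  have := nondecreasing_cvg_mu (mu := P) mF mU Fmono.
  move/cvg_lim => <- //.
  rewrite (_ : P \o F = cst (P B)); last by apply/funext => n /=; rewrite PF.
  by rewrite lim_cst.
by rewrite -PU; exact: erg.
Qed.


Section affine_measure.
Context (R : realType) (al : R) (bep : {posnum R}).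
Local Notation be := (bep%:num).
Let be0 : 0 < be. Proof. by []. Qed.

Definition affphi (y : R) : R := al + be * y.

Lemma affphi_meas : measurable_fun setT affphi.
Proof.
rewrite /affphi; apply: measurable_funD => //; apply: measurable_funM => //.
Qed.

Definition affnu (A : set (measurableTypeR R)) : \bar R :=
  (be%:E * (@lebesgue_measure R) (affphi @^-1` A))%E.

Let mpre (A : set (measurableTypeR R)) : measurable A -> measurable (affphi @^-1` A).
Proof. by move=> mA; rewrite -(setTI (_ @^-1` _)); exact: affphi_meas. Qed.

Let affnu0 : affnu set0 = 0%E.
Proof. by rewrite /affnu preimage_set0 measure0 mule0. Qed.

Let affnu_ge0 B : (0 <= affnu B)%E.
Proof. by rewrite /affnu mule_ge0 // lee_fin ltW. Qed.

Let affnu_sigma_additive : semi_sigma_additive affnu.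
Proof.
move=> F mF tF mUF; rewrite /affnu preimage_bigcup.
rewrite [X in X @ \oo --> _](_ : _ =
    (fun n => be%:E * \sum_(0 <= i < n) (@lebesgue_measure R) (affphi @^-1` F i)))%E; last first.
  by apply/funext => k; rewrite ge0_sume_distrr.
apply: cvgeZl => //.
apply: measure_semi_sigma_additive.
- by move=> n; exact: mpre.
- apply/trivIsetP => /= i j _ _ ij; rewrite -preimage_setI.
  by move/trivIsetP : tF => /(_ _ _ _ _ ij) ->//; rewrite preimage_set0.
- by rewrite -preimage_bigcup; exact: mpre.
Qed.

HB.instance Definition _ := isMeasure.Build _ _ _ affnu
  affnu0 affnu_ge0 affnu_sigma_additive.

Lemma affnu_itv (a c : R) : (@lebesgue_measure R) `]a, c]%classic = affnu `]a, c]%classic.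
Proof.
rewrite /affnu.
have -> : affphi @^-1` `]a, c]%classic = `](a - al) / be, (c - al) / be]%classic.
  apply/seteqP; split => y /=; rewrite !in_itv /= /affphi.
    by rewrite ltr_pdivrMr // lter_pdivlMr // ltrBlDl lerBrDl (mulrC y).
  by rewrite ltr_pdivrMr // lter_pdivlMr // ltrBlDl lerBrDl (mulrC y).
rewrite !lebesgue_measure_itv /= !lte_fin.
rewrite ltr_pM2r ?invr_gt0 // ltrD2r.
case: ifP => ac; last by rewrite mule0.
rewrite -EFinM; congr EFin; field; exact: lt0r_neq0.
Qed.

End affine_measure.

Lemma leb_affine_null (R : realType) (al be : R) (A : set R) :
  0 < be -> measurable A -> (@lebesgue_measure R) A = 0%E ->
  (@lebesgue_measure R) ((fun y => al + be * y) @^-1` A) = 0%E.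
Proof.
move=> be0 mA A0.
pose bep := PosNum be0.
have H : (@lebesgue_measure R) A = affnu al bep A.
  apply: (@lebesgue_measure_unique R (affnu al bep)) => // X [x _ <-].
  exact: affnu_itv.
move: H; rewrite A0 /affnu /affphi /= => /esym/eqP.
by rewrite mule_eq0 eqe gt_eqF //= => /eqP.
Qed.


Fixpoint Phi (Om : Type) (R : realType) (b r : Om -> R) (g : nat -> Om)
  (s : seq nat) (y : R) : R :=
  match s with
  | [::] => y
  | i :: s' => Phi b r g s' (b (g i) + r (g i) * y)
  end.

Lemma Phi_aff (Om : Type) (R : realType) (b r : Om -> R) (g : nat -> Om) :
  (forall w, 0 < r w) -> forall s, exists al be, 0 < be /\
    Phi b r g s = (fun y => al + be * y).
Proof.
move=> rpos; elim => [|i s [al [be [be0 IH]]]] /=.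
  by exists 0, 1; split => //; apply/funext => y; rewrite add0r mul1r.
exists (al + be * b (g i)), (be * r (g i)); split; first exact: mulr_gt0.
by apply/funext => y; rewrite IH mulrDr addrA mulrA.
Qed.

Definition Ecl (Om : Type) (R : realType) (b r : Om -> R) (g : nat -> Om)
  (A : set R) : set R := [set y | exists s, A (Phi b r g s y)].

Lemma Ecl_bigcup (Om : Type) (R : realType) (b r : Om -> R) (g : nat -> Om) A :
  Ecl b r g A = \bigcup_n (Phi b r g (odflt [::] (unpickle n)) @^-1` A).
Proof.
apply/seteqP; split => y.
  move=> [s As]; exists (pickle s) => //.
  have Hs : odflt [::] (unpickle (pickle s)) = s by rewrite pickleK.
  by rewrite /preimage Hs.
by move=> [n _ An]; eexists; exact: An.
Qed.

Lemma Ecl_meas (Om : Type) (R : realType) (b r : Om -> R) (g : nat -> Om) A :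
  (forall w, 0 < r w) -> measurable A -> measurable (Ecl b r g A).
Proof.
move=> rpos mA; rewrite Ecl_bigcup; apply: bigcup_measurable => n _.
have [al [be [be0 ->]]] := Phi_aff b g rpos (odflt [::] (unpickle n)).
rewrite -(setTI (_ @^-1` _)); apply: (_ : measurable_fun setT (fun y => al + be * y)) => //.
  by apply: measurable_funD => //; apply: measurable_funM.
Qed.

Lemma Ecl_null (Om : Type) (R : realType) (b r : Om -> R) (g : nat -> Om) A :
  (forall w, 0 < r w) -> measurable A -> (@lebesgue_measure R) A = 0%E ->
  (@lebesgue_measure R) (Ecl b r g A) = 0%E.
Proof.
move=> rpos mA A0.
have mF n : measurable (Phi b r g (odflt [::] (unpickle n)) @^-1` A).
  have [al [be [be0 ->]]] := Phi_aff b g rpos (odflt [::] (unpickle n)).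
  rewrite -(setTI (_ @^-1` _)); apply: (_ : measurable_fun setT (fun y => al + be * y)) => //.
  by apply: measurable_funD => //; apply: measurable_funM.
have F0 n : (@lebesgue_measure R) (Phi b r g (odflt [::] (unpickle n)) @^-1` A) = 0%E.
  have [al [be [be0 ->]]] := Phi_aff b g rpos (odflt [::] (unpickle n)).
  exact: leb_affine_null.
apply/eqP; rewrite eq_le measure_ge0 andbT.
have := @measure_sigma_subadditive _ _ _ (@lebesgue_measure R) (Ecl b r g A) _ mF (Ecl_meas b g rpos mA).
rewrite Ecl_bigcup => /(_ (fun x y => y)).
by rewrite eseries0 // => n _ _; exact: F0.
Qed.

Lemma Ecl1_countable (Om : Type) (R : realType) (b r : Om -> R) (g : nat -> Om) (x : R) :
  (forall w, 0 < r w) -> countable (Ecl b r g [set x]).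
Proof.
move=> rpos.
pose h n := get [set y | Phi b r g (odflt [::] (unpickle n)) y = x].
have sub : Ecl b r g [set x] `<=` range h.
  move=> y [s /= Hs]; exists (pickle s) => //.
  rewrite /h pickleK /=.
  have := @xgetPex _ point [set y | Phi b r g s y = x] (ex_intro _ y Hs).
  have [al [be [be0 E]]] := Phi_aff b g rpos s.
  move: Hs; rewrite E /= => <- /addrI /mulfI; apply.
  exact: lt0r_neq0.
apply: sub_countable (subset_card_le sub) _.
exact: card_image_le.
Qed.


Unset Implicit Arguments. Set Strict Implicit.

Theorem mainTheorem1 (d : measure_display) (Om : measurableType d)
  (R : realType) (P : probability Om R) (T : Om -> Om)
  (b r : Om -> R) :
  measure_preserving P T ->
  ergodic P T ->
  measurable_fun setT b ->
  measurable_fun setT r ->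
  (forall w, 0 < r w) ->
  countable (range (fun w => fun y : R => b w + r w * y)) ->
  (forall w0 : Om, (0 < P [set w | (fun y : R => (b w + r w * y)%R) =
                                    (fun y : R => (b w0 + r w0 * y)%R)])%E) ->
  P.-integrable setT (EFin \o b) ->
  P.-integrable setT (EFin \o (fun w => ln (r w))) ->
  (\int[P]_w (ln (r w))%:E < 0)%E ->
  let mu := law P (Xseries T b r) in
  purely_atomic mu \/ abs_continuous_Leb mu \/ continuous_singular mu.
Proof.
move=> mp erg mb mr rpos cntS _ _ _ _ mu.
have mT := mp.1.
have mX := X_meas mT mb mr.
pose phi w := fun y : R => b w + r w * y.
have [f finj] := countable_injP _ cntS.
pose g i := get [set w | f (phi w) = i].
have gP w : phi (g (f (phi w))) = phi w.
  have := @xgetPex _ point [set w' | f (phi w') = f (phi w)] (ex_intro _ w erefl).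
  by move/finj; apply; rewrite inE; eexists.
have clos A : forall w z, Ecl b r g A (b w + r w * z) -> Ecl b r g A z.
  move=> w z [s As]; exists (f (phi w) :: s) => /=.
  by have := congr1 (fun h => h z) (gP w); rewrite /phi /= => ->.
pose X := Xseries T b r.
have inv A : measurable A ->
    P (X @^-1` Ecl b r g A) = 0%E \/ P (X @^-1` Ecl b r g A) = 1%E.
  move=> mA; apply: (core_inv mp erg).
    by rewrite -(setTI (_ @^-1` _)); apply: mX => //; exact: Ecl_meas.
  by move=> w; apply: X_back => //; exact: clos.
have mB A : measurable A -> measurable (X @^-1` A).
  by move=> mA; rewrite -(setTI (_ @^-1` _)); exact: mX.
have big A : measurable A -> mu A != 0%E -> P (X @^-1` Ecl b r g A) = 1%E.
  move=> mA muA; case: (inv A mA) => // H0; exfalso; move/eqP: muA; apply.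
  apply/eqP; rewrite eq_le measure_ge0 andbT -H0.
  apply: le_measure; [rewrite inE; exact: mB | rewrite inE; exact: mB (Ecl_meas b g rpos mA) |].
  by move=> w /= Aw; exists [::].
have compl A : measurable A -> mu A != 0%E -> mu (~` Ecl b r g A) = 0%E.
  move=> mA muA; rewrite /mu /law -preimage_setC probability_setC.
    by rewrite big // subee.
  exact: mB (Ecl_meas b g rpos mA).
case: (pselect (forall x : R, mu [set x] = 0%E)) => [atom0|]; last first.
  move/existsNP => [x /eqP mux]; left.
  exists (Ecl b r g [set x]); split; first exact: Ecl1_countable.
  exact: compl.
case: (pselect (abs_continuous_Leb mu)) => [ac|nac]; first by right; left.
right; right; split => //.
move: nac; rewrite /abs_continuous_Leb => /existsNP [A /not_implyP [mA /not_implyP [A0 /eqP muA]]].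
exists (Ecl b r g A); split; first exact: Ecl_meas.
split; first exact: Ecl_null.
exact: compl.
Qed.
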